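(* Let $\Lambda\Subset\mathbb X$ and fix a selector $s$. Let $\rho_0=\mathbf 1_{\{\varnothing\}}$ and $\rho_{n+1}=K_\Lambda\rho_n$ for $n\in\mathbb N_0$. Suppose there exists a function $\xi:\mathbf F\to[0,\infty)$ with $\tilde K_\Lambda\xi\le\xi$ pointwise and $\xi(\varnothing)=1$. Then the pointwise limit $\rho(X)=\lim_{n\to\infty}\rho_n(X)$ exists for every $X\in\mathbf F$, and $\rho=K_\Lambda\rho$, $\rho(\varnothing)=1$ and $|\rho|\le\xi$ pointwise.
   Context: $\mathbb X$ is a finite or countably infinite set, $X\Subset\mathbb X$ means finite subset, $\mathbf F$ is the set of finite subsets. Fix $z:\mathbb X\to\mathbb C$, $W:\mathbf F\to\mathbb C$. Conditional interaction: $W(X\mid B)=\prod_{C\subset B}W(X\cup C)$ if $X\cap B=\varnothing$, $W(X\mid B)=0$ if $X=\{y\}$ with $y\in B$, $W(X\mid B)=1$ otherwise. Boltzmann factor $\kappa(X\mid B)=\prod_{\varnothing\neq S\subset X}W(S\mid B)$, $\kappa(s\mid B)=\kappa(\{s\}\mid B)$. Kernel: $\gamma(s,N\mid B)=\sum_{M\subset N}(-1)^{|N\setminus M|}\kappa(s\mid B\cup M)$. A selector is a map $s:\mathbf F\setminus\{\varnothing\}\to\mathbb X$ with $s_X:=s(X)\in X$; put $X'_s=X\setminus\{s_X\}$. For $\rho:\mathbf F\to\mathbb C$: $(K_\Lambda\rho)(\varnothing)=\rho(\varnothing)$ and, for $X\neq\varnothing$, $(K_\Lambda\rho)(X)=\sum_{N\subset\Lambda\setminus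 X'_s}z(s_X)\gamma(s_X,N\mid X'_s)\rho(X'_s\cup N)$. For $\tilde\rho:\mathbf F\to[0,\infty)$: $(\tilde K_\Lambda\tilde\rho)(\varnothing)=\tilde\rho(\varnothing)$ and, for $X\neq\varnothing$, $(\tilde K_\Lambda\tilde\rho)(X)=\sum_{N\subset\Lambda\setminus X'_s}|z(s_X)|\,|\gamma(s_X,N\mid X'_s)|\,\tilde\rho(X'_s\cup N)$. *)

(* Defs.v *)
From HB Require Import structures.
From mathcomp Require Import all_boot all_order all_algebra.
From mathcomp Require Import finmap.
From mathcomp Require Import complex.
From mathcomp Require Import reals.
Set Implicit Arguments.
Unset Strict Implicit.
Unset Printing Implicit Defensive.
Import Order.TTheory GRing.Theory Num.Theory.
Local Open Scope ring_scope.
Local Open Scope fset_scope.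

Section Kernel.
Variables (R : realType) (T : countType).
Notation C := R[i].
Variables (z : T -> C) (W : {fset T} -> C).

Definition Wc (X B : {fset T}) : C :=
  if X `&` B == fset0 then \prod_(D <- fpowerset B) W (X `|` D)
  else if has (fun y => X == [fset y]) B then 0 else 1.

Definition kappa (X B : {fset T}) : C :=
  \prod_(S <- fpowerset X | S != fset0) Wc S B.

Definition kappa1 (x : T) (B : {fset T}) : C := kappa [fset x] B.

Definition gamma (x : T) (N B : {fset T}) : C :=
  \sum_(M <- fpowerset N) (-1) ^+ #|` N `\` M| * kappa1 x (B `|` M).

Definition is_selector (s : {fset T} -> T) : Prop :=
  forall X : {fset T}, X != fset0 -> s X \in X.

Definition Xprime (s : {fset T} -> T) (X : {fset T}) : {fset T} := X `\ s X.

Definition KL (s : {fset T} -> T) (L : {fset T}) (rho : {fset T} -> C)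
    (X : {fset T}) : C :=
  if X == fset0 then rho fset0
  else \sum_(N <- fpowerset (L `\` Xprime s X))
         z (s X) * gamma (s X) N (Xprime s X) * rho (Xprime s X `|` N).

Definition KLt (s : {fset T} -> T) (L : {fset T}) (rho : {fset T} -> R)
    (X : {fset T}) : R :=
  if X == fset0 then rho fset0
  else \sum_(N <- fpowerset (L `\` Xprime s X))
         ComplexField.Normc.normc (z (s X)) * ComplexField.Normc.normc (gamma (s X) N (Xprime s X))
           * rho (Xprime s X `|` N).

Definition rho0 (X : {fset T}) : C := if X == fset0 then 1 else 0.

Fixpoint rhon (s : {fset T} -> T) (L : {fset T}) (n : nat) : {fset T} -> C :=
  match n with
  | 0 => rho0
  | n.+1 => KL s L (rhon s L n)
  end.

End Kernel.

Definition cvgC (R : realType) (u : nat -> R[i]) (l : R[i]) : Prop :=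
  forall eps : R, 0 < eps -> exists N : nat, forall n, (N <= n)%N ->
    ComplexField.Normc.normc (u n - l) < eps.

(* Main.v *)
Require Import Defs.
From HB Require Import structures.
From mathcomp Require Import all_boot all_order all_algebra.
From mathcomp Require Import finmap complex reals.
From mathcomp Require Import classical_sets boolp.
From mathcomp Require Import lra.
Import Order.TTheory GRing.Theory Num.Theory.
Local Open Scope ring_scope.
Notation nc := ComplexField.Normc.normc.

Section Aux.
Variable R : realType.

Lemma nc_ge0 (x : R[i]) : 0 <= nc x.
Proof. by case: x => a b; rewrite /ComplexField.Normc.normc sqrtr_ge0. Qed.

Lemma nc_Re (x : R[i]) : `|complex.Re x| <= nc x.
Proof.
case: x => a b /=; rewrite /ComplexField.Normc.normc -sqrtr_sqr ler_sqrt.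
  by have := sqr_ge0 b; lra.
by rewrite addr_ge0 ?sqr_ge0.
Qed.

Lemma nc_Im (x : R[i]) : `|complex.Im x| <= nc x.
Proof.
case: x => a b /=; rewrite /ComplexField.Normc.normc -sqrtr_sqr ler_sqrt.
  by have := sqr_ge0 a; lra.
by rewrite addr_ge0 ?sqr_ge0.
Qed.

Lemma nc_le (x : R[i]) : nc x <= `|complex.Re x| + `|complex.Im x|.
Proof.
case: x => a b /=; rewrite /ComplexField.Normc.normc.
rewrite -[X in _ <= X]ger0_norm ?addr_ge0 // -sqrtr_sqr ler_sqrt ?sqr_ge0 //.
rewrite sqrrD !real_normK ?num_real //.
have := mulr_ge0 (normr_ge0 a) (normr_ge0 b); rewrite mulr2n; lra.
Qed.

Lemma nc_sub_sym (x y : R[i]) : nc (x - y) = nc (y - x).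
Proof. by rewrite -normcN opprB. Qed.

Lemma nc_tri (x y w : R[i]) : nc (x - w) <= nc (x - y) + nc (y - w).
Proof. by have := le_normcD (x - y) (y - w); rewrite addrA subrK. Qed.

Lemma mono_lim (u : nat -> R) (M : R) :
  (forall n, u n <= u n.+1) -> (forall n, u n <= M) ->
  exists l, forall e, 0 < e -> exists N, forall n, (N <= n)%N -> l - e < u n /\ u n <= l.
Proof.
move=> inc ub.
have mono : forall m n, (m <= n)%N -> u m <= u n.
  move=> m n /subnKC <-; elim: (n - m)%N => [|k IH]; first by rewrite addn0.
  by rewrite addnS (le_trans IH).
have hs : has_sup (range u).
  split; first by exists (u 0%N), 0%N.
  by exists M => _ [n _ <-].
exists (sup (range u)) => e e0.
have [_ [N _ <-] hN] := sup_adherent e0 hs.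
exists N => n hn; split.
  exact: (lt_le_trans hN (mono _ _ hn)).
by apply: sup_upper_bound => //; exists n.
Qed.

End Aux.
Local Open Scope fset_scope.

Lemma ReB (R : realType) (x y : R[i]) : complex.Re (x - y) = complex.Re x - complex.Re y.
Proof. by case: x; case: y. Qed.
Lemma ImB (R : realType) (x y : R[i]) : complex.Im (x - y) = complex.Im x - complex.Im y.
Proof. by case: x; case: y. Qed.

Section Main.
Variables (R : realType) (T : countType) (z : T -> R[i]) (W : {fset T} -> R[i])
  (L : {fset T}) (s : {fset T} -> T).

Local Notation KLt := (KLt z W s L).
Local Notation KL := (KL z W s L).
Local Notation rn := (rhon z W s L).

Fixpoint an (n : nat) : {fset T} -> R :=
  match n with
  | 0 => fun X => if X == fset0 then 1 else 0
  | n.+1 => KLt (an n)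
  end.

Lemma nc_sum (I : Type) (r : seq I) (F : I -> R[i]) :
  nc (\sum_(i <- r) F i) <= \sum_(i <- r) nc (F i).
Proof.
elim: r => [|x r IH]; first by rewrite !big_nil ComplexField.Normc.normc0.
rewrite !big_cons; apply: le_trans (le_normcD _ _) _.
by rewrite lerD2l.
Qed.

Lemma KLt_mono (f g : {fset T} -> R) : (forall Y, f Y <= g Y) ->
  forall X, KLt f X <= KLt g X.
Proof.
move=> hfg X; rewrite /Defs.KLt; case: ifP => _ //.
apply: ler_sum => N _; apply: ler_wpM2l => //.
by rewrite mulr_ge0 ?nc_ge0.
Qed.

Lemma KLt_ge0 (f : {fset T} -> R) : (forall Y, 0 <= f Y) ->
  forall X, 0 <= KLt f X.
Proof.
move=> hf X; rewrite /Defs.KLt; case: ifP => _ //.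
by apply: sumr_ge0 => N _; rewrite !mulr_ge0 ?nc_ge0.
Qed.

Arguments KLt_mono {f g}.
Arguments KLt_ge0 {f}.

Lemma KLt_sub (f g : {fset T} -> R) X :
  KLt g X - KLt f X = KLt (fun Y => g Y - f Y) X.
Proof.
rewrite /Defs.KLt; case: ifP => _ //.
by rewrite -sumrB; apply: eq_bigr => N _; rewrite mulrBr.
Qed.

Lemma KL_sub (f g : {fset T} -> R[i]) X :
  KL g X - KL f X = KL (fun Y => g Y - f Y) X.
Proof.
rewrite /Defs.KL; case: ifP => _ //.
by rewrite -sumrB; apply: eq_bigr => N _; rewrite mulrBr.
Qed.

Lemma nc_KL (f : {fset T} -> R[i]) X :
  nc (KL f X) <= KLt (fun Y => nc (f Y)) X.
Proof.
rewrite /Defs.KL /Defs.KLt; case: ifP => _ //.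
have h := @nc_sum {fset T} (fpowerset (L `\` Xprime s X)) (fun N => z (s X) * gamma W (s X) N (Xprime s X) * f (Xprime s X `|` N)).
apply: le_trans h _; apply: ler_sum => N _.
by rewrite !ComplexField.Normc.normcM.
Qed.

Lemma KL0 (f : {fset T} -> R[i]) : KL f fset0 = f fset0.
Proof. by rewrite /Defs.KL eqxx. Qed.

Lemma KLt0 (f : {fset T} -> R) : KLt f fset0 = f fset0.
Proof. by rewrite /Defs.KLt eqxx. Qed.

Lemma anS n : an n.+1 = KLt (an n). Proof. by []. Qed.
Lemma rnS n : rn n.+1 = KL (rn n). Proof. by []. Qed.

Lemma an_ge0 n X : 0 <= an n X.
Proof.
elim: n X => [|n IH] X; first by rewrite /=; case: ifP.
by rewrite anS; exact: KLt_ge0.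
Qed.

Variables (xi : {fset T} -> R) (xi_ge0 : forall X, 0 <= xi X)
  (xi_sup : forall X, KLt xi X <= xi X) (xi0 : xi fset0 = 1).

Lemma an_le_xi n X : an n X <= xi X.
Proof.
elim: n X => [|n IH] X.
  by rewrite /=; case: eqP => [->|_]; rewrite ?xi0.
rewrite anS; exact: le_trans (KLt_mono IH X) (xi_sup X).
Qed.

Lemma an_inc n X : an n X <= an n.+1 X.
Proof.
elim: n X => [|n IH] X.
  rewrite anS; have [->|nX] := eqVneq X fset0; first by rewrite KLt0.
  rewrite [an 0 X]/= (negbTE nX); exact: KLt_ge0 (an_ge0 0) X.
exact: KLt_mono IH X.
Qed.

Lemma rn_le n X : nc (rn n X) <= an n X.
Proof.
elim: n X => [|n IH] X.
  rewrite /= /rho0; case: ifP => _.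
    by rewrite ComplexField.Normc.normc1.
  by rewrite ComplexField.Normc.normc0.
rewrite rnS anS; exact: le_trans (nc_KL _ _) (KLt_mono IH X).
Qed.

Lemma rn_diff n X : nc (rn n.+1 X - rn n X) <= an n.+1 X - an n X.
Proof.
elim: n X => [|n IH] X.
  have [->|nX] := eqVneq X fset0.
    by rewrite rnS anS KL0 KLt0 !subrr ComplexField.Normc.normc0.
  rewrite rnS anS [rn 0 X]/= [an 0 X]/= /rho0 (negbTE nX) subr0 subr0.
  exact: le_trans (nc_KL _ _) (KLt_mono (rn_le 0) X).
change (nc (KL (rn n.+1) X - KL (rn n) X) <= KLt (an n.+1) X - KLt (an n) X).
rewrite KL_sub KLt_sub.
exact: le_trans (nc_KL _ _) (KLt_mono IH X).
Qed.

Lemma rn_cauchy n m X : (n <= m)%N -> nc (rn m X - rn n X) <= an m X - an n X.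
Proof.
move/subnKC <-; elim: (m - n)%N => [|k IH].
  by rewrite addn0 !subrr ComplexField.Normc.normc0.
rewrite addnS; apply: le_trans (@nc_tri R _ (rn (n + k) X) _) _.
have := rn_diff (n + k) X; lra.
Qed.

Lemma rn_empty n : rn n fset0 = 1.
Proof. by elim: n => [|n IH]; rewrite ?rnS ?KL0 // /= /rho0 eqxx. Qed.


Local Close Scope fset_scope.
Lemma rn_lim X : exists l : R[i], forall e, 0 < e ->
  exists N, forall n, (N <= n)%N -> nc (rn n X - l) < e.
Proof.
have [la ha] := @mono_lim R (fun n => an n X) (xi X) (an_inc^~ X) (an_le_xi^~ X).
have [lr hr] : exists lr, forall e, 0 < e -> exists N, forall n, (N <= n)%N ->
    lr - e < complex.Re (rn n X) + an n X /\ complex.Re (rn n X) + an n X <= lr.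
  apply: (@mono_lim R (fun n => complex.Re (rn n X) + an n X) (xi X + xi X)).
    move=> n; have h1 := @nc_Re _ (rn n.+1 X - rn n X); have h2 := rn_diff n X.
    move: (le_trans h1 h2); rewrite ReB ler_norml => /andP[h3 h4]; lra.
  move=> n; have h1 := @nc_Re _ (rn n X); have h2 := rn_le n X; have h3 := an_le_xi n X.
  move: h1; rewrite ler_norml => /andP[h4 h5]; lra.
have [li hi] : exists li, forall e, 0 < e -> exists N, forall n, (N <= n)%N ->
    li - e < complex.Im (rn n X) + an n X /\ complex.Im (rn n X) + an n X <= li.
  apply: (@mono_lim R (fun n => complex.Im (rn n X) + an n X) (xi X + xi X)).
    move=> n; have h1 := @nc_Im _ (rn n.+1 X - rn n X); have h2 := rn_diff n X.
    move: (le_trans h1 h2); rewrite ImB ler_norml => /andP[h3 h4]; lra.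
  move=> n; have h1 := @nc_Im _ (rn n X); have h2 := rn_le n X; have h3 := an_le_xi n X.
  move: h1; rewrite ler_norml => /andP[h4 h5]; lra.
exists ((lr - la) +i* (li - la))%C => e e0.
have e4 : 0 < e / 4 by rewrite divr_gt0.
have [N1 h1] := ha _ e4; have [N2 h2] := hr _ e4; have [N3 h3] := hi _ e4.
exists (maxn N1 (maxn N2 N3)) => n; rewrite !geq_max => /andP[n1 /andP[n2 n3]].
have [a1 a2] := h1 n n1; have [b1 b2] := h2 n n2; have [c1 c2] := h3 n n3.
apply: le_lt_trans (@nc_le _ _) _; rewrite ReB ImB /=.
have hx : `|complex.Re (rn n X) - (lr - la)| < e / 4.
  by rewrite ltr_norml; apply/andP; split; lra.
have hy : `|complex.Im (rn n X) - (li - la)| < e / 4.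
  by rewrite ltr_norml; apply/andP; split; lra.
lra.
Qed.

End Main.
Local Close Scope fset_scope.

Lemma le_of_eps (R : realType) (a b : R) :
  (forall e, 0 < e -> a < b + e) -> a <= b.
Proof.
move=> H; case: (leP a b) => // h.
have := H (a - b); rewrite subr_gt0 => /(_ h); lra.
Qed.

Lemma sum_tends0 (R : realType) (I : Type) (r : seq I) (c : I -> R)
    (g : nat -> I -> R) :
  (forall i, 0 <= c i) -> (forall n i, 0 <= g n i) ->
  (forall i e, 0 < e -> exists N, forall n, (N <= n)%N -> g n i < e) ->
  forall e, 0 < e -> exists N, forall n, (N <= n)%N ->
    \sum_(i <- r) c i * g n i < e.
Proof.
move=> hc hg hlim; elim: r => [|x r IH] e e0.
  by exists 0%N => n _; rewrite big_nil.
have cx1 : 0 < c x + 1 by have := hc x; lra.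
have e2 : 0 < e / 2 by rewrite divr_gt0.
have [N1 h1] := hlim x (e / 2 / (c x + 1)) (divr_gt0 e2 cx1).
have [N2 h2] := IH (e / 2) e2.
exists (maxn N1 N2) => n; rewrite geq_max => /andP[n1 n2].
rewrite big_cons.
have := h1 n n1; rewrite ltr_pdivlMr // => q1.
have := h2 n n2; have := hg n x; have := hc x; nra.
Qed.
Local Open Scope fset_scope.

Theorem proposition6p3 (R : realType) (T : countType)
    (z : T -> R[i]) (W : {fset T} -> R[i])
    (L : {fset T}) (s : {fset T} -> T) (hs : is_selector s)
    (xi : {fset T} -> R)
    (xi_ge0 : forall X, 0 <= xi X)
    (xi_sup : forall X, KLt z W s L xi X <= xi X)
    (xi0 : xi fset0 = 1) :
  exists rho : {fset T} -> R[i],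
    (forall X, cvgC (fun n => rhon z W s L n X) (rho X)) /\
    (forall X, rho X = KL z W s L rho X) /\
    rho fset0 = 1 /\
    (forall X, ComplexField.Normc.normc (rho X) <= xi X).
Proof.
have [rho hrho] := choice (@rn_lim R T z W L s xi xi_ge0 xi_sup xi0).
exists rho; split; first exact: hrho.
Local Close Scope fset_scope.
split; last split.
- move=> X; have [->|nX] := eqVneq X fset0; first by rewrite KL0.
  apply/eqP; rewrite -subr_eq0; apply/eqP; apply: ComplexField.Normc.eq0_normc.
  apply: le_anti; rewrite nc_ge0 andbT; apply: le_of_eps => e e0; rewrite add0r.
  have e2 : 0 < e / 2 by rewrite divr_gt0.
  have hT : exists N, forall n, (N <= n)%N ->
      KLt z W s L (fun Y => nc (rhon z W s L n Y - rho Y)) X < e / 2.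
    rewrite /Defs.KLt (negbTE nX).
    apply: (@sum_tends0 R {fset T} _
      (fun N => nc (z (s X)) * nc (gamma W (s X) N (Xprime s X)))
      (fun n N => nc (rhon z W s L n (Xprime s X `|` N)%fset - rho (Xprime s X `|` N)%fset))).
    + by move=> N; rewrite mulr_ge0 ?nc_ge0.
    + by move=> n N; rewrite nc_ge0.
    + by move=> N; apply: hrho.
    + exact: e2.
  have [N1 h1] := hT; have [N2 h2] := hrho X _ e2.
  pose n := maxn N1 N2.
  have hn1 : (N1 <= n)%N by rewrite leq_maxl.
  have hn2 : (N2 <= n.+1)%N by rewrite (leq_trans (leq_maxr N1 N2)).
  apply: le_lt_trans (@nc_tri R _ (rhon z W s L n.+1 X) _) _.
  have -> : rhon z W s L n.+1 X = KL z W s L (rhon z W s L n) X by [].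
  rewrite KL_sub.
  have a := h1 n hn1; have b := h2 _ hn2; rewrite nc_sub_sym in b.
  have c := @nc_KL R T z W L s (fun Y => rhon z W s L n Y - rho Y) X.
  lra.
- apply/eqP; rewrite eq_sym -subr_eq0; apply/eqP; apply: ComplexField.Normc.eq0_normc.
  apply: le_anti; rewrite nc_ge0 andbT; apply: le_of_eps => e e0; rewrite add0r.
  have [N h] := hrho fset0 e e0; have := h N (leqnn N).
  by rewrite rn_empty.
- move=> X; apply: le_of_eps => e e0.
  have [N h] := hrho X e e0; have := h N (leqnn N).
  have := @nc_tri R (rho X) (rhon z W s L N X) 0; rewrite !subr0 (@nc_sub_sym R (rho X)).
  have := @rn_le R T z W L s N X; have := @an_le_xi R T z W L s xi xi_ge0 xi_sup xi0 N X.
  lra.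
Qed.
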